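(* Let $\mathcal U$ be a non-principal ultrafilter on $\mathbb N$ and let $\mathcal A$ be a unital Banach algebra such that the ultrapower $(\mathcal A)_{\mathcal U}$ is purely infinite. Then $\mathcal A$ is purely infinite.
   Context: A complex unital algebra $\mathcal B$ is purely infinite if it is not a division algebra and for every non-zero $a\in\mathcal B$ there exist $b,c\in\mathcal B$ with $bac=1_{\mathcal B}$. For an ultrafilter $\mathcal U$ on $\mathbb N$, the ultrapower is $(\mathcal A)_{\mathcal U}=\ell^\infty(\mathcal A)/c_{\mathcal U}(\mathcal A)$, where $\ell^\infty(\mathcal A)$ is the Banach algebra of bounded sequences in $\mathcal A$ with pointwise operations and sup norm, and $c_{\mathcal U}(\mathcal A)$ is the closed ideal of sequences $(a_n)$ with $\lim_{n\to\mathcal U}\|a_n\|=0$. *)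

(* Defs.v *)
From HB Require Import structures.
From mathcomp Require Import all_boot all_order all_algebra.
From mathcomp Require Import all_classical all_reals all_analysis.
From mathcomp Require Import complex.
Set Implicit Arguments. Unset Strict Implicit. Unset Printing Implicit Defensive.
Import Order.TTheory GRing.Theory Num.Theory.
Import numFieldNormedType.Exports.
Local Open Scope classical_set_scope.
Local Open Scope ring_scope.

Record unital_banach_algebra (R : realType) (A : completeNormedModType R[i])
    (mul : A -> A -> A) (one : A) : Prop := {
  ba_mulA : forall x y z, mul x (mul y z) = mul (mul x y) z;
  ba_mul1l : forall x, mul one x = x;
  ba_mul1r : forall x, mul x one = x;
  ba_mulDl : forall x y z, mul (x + y) z = mul x z + mul y z;
  ba_mulDr : forall x y z, mul x (y + z) = mul x y + mul x z;
  ba_mulZl : forall (k : R[i]) x y, mul (k *: x) y = k *: mul x y;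
  ba_mulZr : forall (k : R[i]) x y, mul x (k *: y) = k *: mul x y;
  ba_norm_mul : forall x y, `|mul x y| <= `|x| * `|y|
}.

(* Algebraic notions for a (unital) algebra presented by a carrier predicate
   S on a type T, modulo an equivalence eqv (a setoid presentation; for A
   itself S is everything and eqv is equality, for the ultrapower T is the
   type of sequences, S the bounded ones, and eqv equality modulo c_U). *)
Definition is_division_algebra (T : Type) (S : T -> Prop) (eqv : T -> T -> Prop)
    (mul : T -> T -> T) (one zero : T) : Prop :=
  ~ eqv one zero /\
  forall a, S a -> ~ eqv a zero ->
    exists b, S b /\ eqv (mul a b) one /\ eqv (mul b a) one.

Definition is_purely_infinite (T : Type) (S : T -> Prop) (eqv : T -> T -> Prop)
    (mul : T -> T -> T) (one zero : T) : Prop :=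
  ~ is_division_algebra S eqv mul one zero /\
  forall a, S a -> ~ eqv a zero ->
    exists b c, S b /\ S c /\ eqv (mul (mul b a) c) one.

Definition purely_infinite (R : realType) (A : completeNormedModType R[i])
    (mul : A -> A -> A) (one : A) : Prop :=
  is_purely_infinite (fun _ => True) (@eq A) mul one 0.

Definition bounded_seq (R : realType) (A : completeNormedModType R[i])
    (a : nat -> A) : Prop :=
  exists M : R[i], forall n, `|a n| <= M.

Definition c_U (R : realType) (A : completeNormedModType R[i])
    (U : set_system nat) (a : nat -> A) : Prop :=
  forall e : R[i], 0 < e -> \forall n \near U, `|a n| < e.

Definition ultrapower_eqv (R : realType) (A : completeNormedModType R[i])
    (U : set_system nat) (a b : nat -> A) : Prop :=
  c_U U (fun n => a n - b n).

Definition ultrapower_purely_infinite (R : realType)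
    (A : completeNormedModType R[i]) (U : set_system nat)
    (mul : A -> A -> A) (one : A) : Prop :=
  is_purely_infinite (@bounded_seq R A) (ultrapower_eqv U)
    (fun a b n => mul (a n) (b n)) (fun _ => one) (fun _ => 0).

Definition nonprincipal (U : set_system nat) : Prop :=
  forall n : nat, U <> principal_filter n.

(* Main.v *)
Require Import Defs.
From HB Require Import structures.
From mathcomp Require Import all_boot all_order all_algebra.
From mathcomp Require Import all_classical all_reals all_analysis.
From mathcomp Require Import complex.
Set Implicit Arguments. Unset Strict Implicit. Unset Printing Implicit Defensive.
Import Order.TTheory GRing.Theory Num.Theory.
Import numFieldNormedType.Exports.
Local Open Scope classical_set_scope.
Local Open Scope ring_scope.
Lemma mul0l (R : realType) (A : completeNormedModType R[i]) mul (one : A)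
  (HA : unital_banach_algebra mul one) x : mul 0 x = 0.
Proof. by rewrite -(scale0r (0:A)) (ba_mulZl HA) !scale0r. Qed.

Lemma mul0r (R : realType) (A : completeNormedModType R[i]) mul (one : A)
  (HA : unital_banach_algebra mul one) x : mul x 0 = 0.
Proof. by rewrite -(scale0r (0:A)) (ba_mulZr HA) !scale0r. Qed.

Lemma mulBl (R : realType) (A : completeNormedModType R[i]) mul (one : A)
  (HA : unital_banach_algebra mul one) x y z : mul (x - y) z = mul x z - mul y z.
Proof. by rewrite (ba_mulDl HA) -scaleN1r (ba_mulZl HA) scaleN1r. Qed.

Lemma mulBr (R : realType) (A : completeNormedModType R[i]) mul (one : A)
  (HA : unital_banach_algebra mul one) x y z : mul z (x - y) = mul z x - mul z y.
Proof. by rewrite (ba_mulDr HA) -scaleN1r (ba_mulZr HA) scaleN1r. Qed.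

Lemma mul_suml (R : realType) (A : completeNormedModType R[i]) mul (one : A)
  (HA : unital_banach_algebra mul one) (f : nat -> A) m n z :
  mul (\sum_(m <= k < n) f k) z = \sum_(m <= k < n) mul (f k) z.
Proof.
apply: (big_morph (fun s => mul s z)).
- by move=> a b; rewrite (ba_mulDl HA).
- exact: (mul0l HA).
Qed.

Lemma norm_one_ge1 (R : realType) (A : completeNormedModType R[i]) mul (one : A)
  (HA : unital_banach_algebra mul one) : one != 0 -> 1 <= `|one|.
Proof.
move=> h; have p : 0 < `|one| by rewrite normr_gt0.
have := ba_norm_mul HA one one; rewrite (ba_mul1l HA).
by rewrite -{1}(mul1r `|one|) ler_pM2r.
Qed.

Lemma norm_small0 (R : realType) (A : completeNormedModType R[i]) (v : A) :
  (forall e : R[i], 0 < e -> `|v| < e) -> v = 0.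
Proof.
move=> h; apply/eqP; apply: contraT => nz.
have p : 0 < `|v| by rewrite normr_gt0.
by have := h _ p; rewrite ltxx.
Qed.

Lemma cU_const (R : realType) (A : completeNormedModType R[i]) (U : set_system nat)
  (HU : ProperFilter U) (v : A) : c_U U (fun _ => v) -> v = 0.
Proof.
move=> h; apply: norm_small0 => e e0.
by have [n] := filter_ex (h e e0).
Qed.
Lemma cU_bound (R : realType) (A : completeNormedModType R[i]) (U : set_system nat)
  (HU : Filter U) (f g : nat -> A) (K r : R[i]) : 0 <= K -> 0 < r -> c_U U g ->
  (forall n, `|g n| < r -> `|f n| <= K * `|g n|) -> c_U U f.
Proof.
move=> K0 r0 hg hb e e0.
have K1 : 0 < K + 1 by rewrite ltr_wpDl.
have d0 : 0 < e / (K + 1) by rewrite divr_gt0.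
apply: filterS2 (hg r r0) (hg _ d0) => n h1 h2.
apply: le_lt_trans (hb n h1) _.
apply: le_lt_trans (_ : K * (e / (K+1)) < e).
  by rewrite ler_wpM2l // ltW.
rewrite mulrA ltr_pdivrMr // mulrDr mulr1 mulrC ltrDl //.
Qed.
Lemma arch_geo (R : realType) (K e : R[i]) : 0 <= K -> 0 < e ->
  exists N : nat, K * (2^-1) ^+ N < e.
Proof.
move=> K0 e0.
set t := K / e.
have t0 : 0 <= t by rewrite divr_ge0 // ltW.
have tE : t = real_complex R (complex.Re t).
  by rewrite [LHS]complexE (ger0_Im t0) mulr0 addr0.
have Rt0 : 0 <= complex.Re t by rewrite -ler0c -tE.
have := archi_boundP Rt0; set N := Num.Def.archi_bound _ => hN.
exists N.
have tN : t < N%:R by rewrite tE -(rmorph_nat (real_complex R)) ltcR.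
have p2 : 0 < (2:R[i]) ^+ N by rewrite exprn_gt0.
rewrite exprVn ltr_pdivrMr //.
have -> : K = t * e by rewrite /t mulrVK // unitfE gt_eqF.
rewrite mulrC ltr_pM2l //.
apply: lt_le_trans tN _.
rewrite -natrX ler_nat; apply: ltnW; exact: ltn_expl.
Qed.
Lemma geo_sum (R : realType) (m d : nat) :
  \sum_(m <= k < m + d) ((2:R[i])^-1) ^+ k + 2 * (2^-1) ^+ (m + d)
  = 2 * (2^-1) ^+ m.
Proof.
elim: d => [|d IH]; first by rewrite addn0 big_geq // add0r.
rewrite addnS big_nat_recr ?leq_addr //= -IH -addrA; congr (_ + _).
have h2 : (2:R[i]) != 0 by rewrite pnatr_eq0.
by rewrite exprS mulrA divff // mul1r mulr_natl mulr2n.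
Qed.
Lemma neumann (R : realType) (A : completeNormedModType R[i]) mul (one : A)
  (HA : unital_banach_algebra mul one) (x : A) :
  `|one - x| <= 2^-1 -> exists y, mul y x = one.
Proof.
move=> hx.
set u := one - x.
pose pw k := iter k (fun p => mul p u) one.
have pwS k : pw k.+1 = mul (pw k) u by [].
have hpos : 0 <= (2:R[i])^-1 by rewrite invr_ge0 ler0n.
have pwb k : `|pw k| <= `|one| * (2^-1) ^+ k.
  elim: k => [|k IH]; first by rewrite expr0 mulr1.
  rewrite pwS exprS mulrCA mulrC.
  apply: le_trans (ba_norm_mul HA _ _) _.
  apply: ler_pM.
  - exact: normr_ge0.
  - exact: normr_ge0.
  - exact: IH.
  - exact: hx.
have sumb m n : `|\sum_(m <= k < n) pw k| <= 2 * `|one| * (2^-1) ^+ m.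
  apply: le_trans (ler_norm_sum _ _ _) _.
  have [mn|nm] := leqP m n; last first.
    rewrite big_geq; last exact: ltnW.
    apply: mulr_ge0; last exact: exprn_ge0.
    apply: mulr_ge0; [exact: ler0n | exact: normr_ge0].
  apply: le_trans (ler_sum _ (fun k _ => pwb k)) _.
  rewrite -mulr_sumr -mulrA [2 * _]mulrC -mulrA.
  apply: ler_wpM2l; first exact: normr_ge0.
  rewrite -(subnKC mn) mulrC -(geo_sum R m (n - m)) lerDl.
  apply: mulr_ge0; [exact: ler0n | exact: exprn_ge0].
have hle1 : (2:R[i])^-1 <= 1 by rewrite invf_le1 ?ler1n // ltr0n.
have K0 : 0 <= 2 * `|one| by apply: mulr_ge0; [exact: ler0n | exact: normr_ge0].
have cS : cvgn (series pw).
  apply/cauchy_cvgP/cauchy_seriesP => e e0.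
  have [N0 hN0] := arch_geo K0 e0.
  exists ([set m | (N0 <= m)%N], setT); first by split; [exists N0 | exact: filterT].
  case=> m n /= [hm _].
  apply: le_lt_trans (sumb m n) _.
  apply: le_lt_trans hN0.
  apply: ler_wpM2l => //.
  exact: ler_wiXn2l.
set s := limn (series pw).
have xE : x = one - u by rewrite /u opprB addrC subrK.
have tele N : mul (series pw N) x = one - pw N.
  rewrite xE (mulBr HA) (ba_mul1r HA) /series /= (mul_suml HA).
  have -> : \sum_(0 <= k < N) mul (pw k) u = \sum_(0 <= k < N) pw k.+1 by [].
  have h : \sum_(0 <= k < N) pw k.+1 - \sum_(0 <= k < N) pw k = pw N - one.
    by rewrite -sumrB telescope_sumr.
  by rewrite -opprB h opprB.
exists s; apply/eqP; rewrite -subr_eq0; apply/eqP.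
apply: norm_small0 => e e0.
have y0 : 0 < 2 * (`|x| + 1) by rewrite mulr_gt0 ?ltr0n // ltr_wpDl.
have d0 : 0 < e / (2 * (`|x| + 1)) by rewrite divr_gt0.
have h1 := cS; move: h1 => /cvgrPdist_lt/(_ _ d0) h1.
have e20 : 0 < e / 2 by rewrite divr_gt0 ?ltr0n.
have [N0 hN0] := arch_geo (normr_ge0 one) e20.
have h2 : \forall N \near \oo, (N0 <= N)%N by exists N0.
have [N [hN1 hN2]] := filter_ex (filterI h1 h2).
have -> : mul s x - one = mul (s - series pw N) x - pw N.
  by rewrite (mulBl HA) tele opprB -addrA (addrAC (pw N)) subrr add0r.
apply: le_lt_trans (ler_normB _ _) _.
rewrite [X in _ < X](splitr e).
apply: ler_ltD.
  apply: le_trans (ba_norm_mul HA _ _) _.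
  apply: le_trans (_ : e / (2 * (`|x| + 1)) * (`|x| + 1) <= _).
    apply: ler_pM; [exact: normr_ge0 | exact: normr_ge0 | exact: ltW | ].
    by rewrite lerDl ler01.
  by rewrite invfM mulrA mulfVK // gt_eqF // ltr_wpDl.
apply: le_lt_trans (pwb N) _.
apply: le_lt_trans hN0.
apply: ler_wpM2l; first exact: normr_ge0.
exact: ler_wiXn2l.
Qed.
From mathcomp Require Import ring.

Lemma bounded_mul (R : realType) (A : completeNormedModType R[i]) mul (one : A)
  (HA : unital_banach_algebra mul one) (a b : nat -> A) :
  bounded_seq a -> bounded_seq b -> bounded_seq (fun n => mul (a n) (b n)).
Proof.
move=> [Ma ha] [Mb hb]; exists (Ma * Mb) => n.
apply: le_trans (ba_norm_mul HA _ _) _.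
by apply: ler_pM; rewrite ?normr_ge0.
Qed.

Lemma bound_ge0 (R : realType) (A : completeNormedModType R[i]) (a : nat -> A) M :
  (forall n, `|a n| <= M) -> 0 <= M.
Proof. by move=> h; apply: le_trans (h 0%N); rewrite normr_ge0. Qed.

Lemma dfin (R : realType) (A : completeNormedModType R[i]) mul (one : A)
  (HA : unital_banach_algebra mul one) (U : set_system nat) (HU : Filter U)
  (Hdiv : is_division_algebra (fun _ => True) (@eq A) mul one 0)
  (xs ys : nat -> A) : bounded_seq xs -> bounded_seq ys ->
  ultrapower_eqv U (fun n => mul (xs n) (ys n)) (fun _ => one) ->
  ultrapower_eqv U (fun n => mul (ys n) (xs n)) (fun _ => one).
Proof.
move=> [Mx hx] [My hy] h.
have [one0 Hinv] := Hdiv.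
have one1 : 1 <= `|one| by apply: (norm_one_ge1 HA); apply/eqP.
have Mx0 := bound_ge0 hx; have My0 := bound_ge0 hy.
have h2 : (0:R[i]) < 2^-1 by rewrite invr_gt0 ltr0n.
apply: (cU_bound (K := My * (2 * `|one|) * Mx) HU _ h2 h).
  apply: mulr_ge0 => //; apply: mulr_ge0 => //; apply: mulr_ge0; rewrite ?ler0n ?normr_ge0 //.
move=> n hn.
set x := xs n in hn *; set y := ys n in hn *; set z := mul x y in hn *.
have half_lt1 : (2:R[i])^-1 < 1 by rewrite invf_lt1 ?ltr1n // ltr0n.
have z0 : z <> 0.
  move=> z0; move: hn; rewrite z0 sub0r normrN => hn.
  by have := lt_le_trans (lt_le_trans hn (ltW half_lt1)) one1; rewrite ltxx.
have x0 : x <> 0 by move=> x0; apply: z0; rewrite /z x0 (mul0l HA).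
have [v [_ [zv vz]]] := Hinv z I z0.
have [w [_ [xw wx]]] := Hinv x I x0.
have xyv : mul x (mul y v) = one by rewrite (ba_mulA HA).
have wE : w = mul y v.
  by rewrite -(ba_mul1r HA w) -xyv (ba_mulA HA) wx (ba_mul1l HA).
have yvx : mul (mul y v) x = one by rewrite -wE.
have vE : one - v = mul (z - one) v by rewrite (mulBl HA) zv (ba_mul1l HA).
have eq1 : mul y x - one = mul (mul y (mul (z - one) v)) x.
  by rewrite -vE (mulBr HA) (ba_mul1r HA) (mulBl HA) yvx.
have vb : `|v| <= 2 * `|one|.
  have vE2 : v = one - mul (z - one) v by rewrite -vE opprB addrC subrK.
  have : `|v| <= `|one| + 2^-1 * `|v|.
    rewrite {1}vE2; apply: le_trans (ler_normB _ _) _; rewrite lerD2l.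
    apply: le_trans (ba_norm_mul HA _ _) _.
    by rewrite ler_wpM2r ?normr_ge0 // ltW.
  rewrite -lerBlDr {1}(splitr `|v|) mulrC addrK.
  by rewrite ler_pdivrMl // ltr0n.
rewrite eq1.
apply: le_trans (ba_norm_mul HA _ _) _.
apply: le_trans (_ : `|y| * (`|z - one| * `|v|) * `|x| <= _).
  apply: ler_wpM2r; first exact: normr_ge0.
  apply: le_trans (ba_norm_mul HA _ _) _.
  apply: ler_wpM2l; first exact: normr_ge0.
  exact: (ba_norm_mul HA).
apply: le_trans (_ : My * (`|z - one| * (2 * `|one|)) * Mx <= _).
  apply: ler_pM.
  - by apply: mulr_ge0; [exact: normr_ge0 | apply: mulr_ge0; exact: normr_ge0].
  - exact: normr_ge0.
  - apply: ler_pM.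
    + exact: normr_ge0.
    + by apply: mulr_ge0; exact: normr_ge0.
    + exact: hy.
    + by apply: ler_wpM2l; [exact: normr_ge0 | exact: vb].
  - exact: hx.
by rewrite le_eqVlt; apply/orP; left; apply/eqP; ring.
Qed.

Unset Implicit Arguments.
Set Strict Implicit.

Theorem corollary2p4 (R : realType) (A : completeNormedModType R[i])
    (mul : A -> A -> A) (one : A) (U : set_system nat)
    (HU : UltraFilter U) (HUnp : nonprincipal U)
    (HA : unital_banach_algebra mul one) :
  ultrapower_purely_infinite U mul one -> purely_infinite mul one.
Proof.
have HF : Filter U by typeclasses eauto.
move=> [nondivB piB]; split.
  move=> Hdiv; apply: nondivB; split.
    move=> h; apply: Hdiv.1; have := cU_const (@ultra_proper _ _ HU) h; by rewrite subr0 => ->.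
  move=> a Ba na.
  have [b [c [Bb [Bc H]]]] := piB a Ba na.
  exists (fun n => mul (c n) (b n)); split; first exact: (bounded_mul HA).
  split.
  - have H1 : ultrapower_eqv U (fun n => mul (b n) (mul (a n) (c n))) (fun _ => one).
      have -> : (fun n => mul (b n) (mul (a n) (c n)))
              = (fun n => mul (mul (b n) (a n)) (c n)).
        by apply: funext => n; rewrite (ba_mulA HA).
      exact: H.
    have := dfin HA HF Hdiv Bb (bounded_mul HA Ba Bc) H1.
    have -> : (fun n => mul (mul (a n) (c n)) (b n))
            = (fun n => mul (a n) (mul (c n) (b n))).
      by apply: funext => n; rewrite (ba_mulA HA).
    by [].
  - have := dfin HA HF Hdiv (bounded_mul HA Bb Ba) Bc H.
    have -> : (fun n => mul (c n) (mul (b n) (a n)))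
            = (fun n => mul (mul (c n) (b n)) (a n)).
      by apply: funext => n; rewrite (ba_mulA HA).
    by [].
move=> a _ na.
have Ba : bounded_seq (fun _ : nat => a) by exists `|a|.
have na' : ~ ultrapower_eqv U (fun _ => a) (fun _ => 0).
  by move=> h; apply: na; have := cU_const (@ultra_proper _ _ HU) h; rewrite subr0.
have [b [c [Bb [Bc H]]]] := piB _ Ba na'.
have h2 : (0:R[i]) < 2^-1 by rewrite invr_gt0 ltr0n.
have [n hn] := filter_ex (H _ h2).
have hn' : `|one - mul (mul (b n) a) (c n)| <= 2^-1 by rewrite distrC; exact: ltW.
have [y hy] := neumann HA hn'.
exists (mul y (b n)), (c n); split => //; split => //.
by rewrite -!(ba_mulA HA) in hy *.
Qed.
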